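(* Let $q\geq 2$ be an integer and let $\lambda\in\{0,\ldots,q-1\}$. Then for every $a\in\mathbb{N}$, $$u_q(aq+\lambda)=q\,u_q(a)+(\lambda+1-q)w_q(a)+\frac{q}{2}a^2+\left(\lambda+1-\frac{q}{2}\right)a = q\,u_q(a)+(\lambda+1-q)w_q(a)+q\frac{a(a+1)}{2}+(\lambda+1-q)a.$$
   Context: For an integer $q\geq 2$ and $n\in\mathbb{N}=\{0,1,2,\ldots\}$: $v_q(0)=0$ and, for $n>0$, $v_q(n)=\max\{k\in\mathbb{N}: q^k \text{ divides } n\}$; $w_q(n)=\sum_{i=0}^n v_q(i)$; $u_q(n)=\sum_{i=0}^n w_q(i)$. *)

(* Defs.v *)
From mathcomp Require Import all_boot all_order all_algebra.
Set Implicit Arguments. Unset Strict Implicit. Unset Printing Implicit Defensive.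

(* v_q(n): 0 if n = 0, else the largest k with q^k | n.
   For q >= 2 and n > 0, any such k satisfies k <= n (q^k > k),
   so the maximum over k < n.+1 is the maximum over all of N. *)
Definition vq (q n : nat) : nat :=
  if n == 0 then 0 else \max_(k < n.+1 | q ^ k %| n) k.

Definition wq (q n : nat) : nat := \sum_(0 <= i < n.+1) vq q i.
Definition uq (q n : nat) : nat := \sum_(0 <= i < n.+1) wq q i.

(* Main.v *)
Require Import Defs.
From mathcomp Require Import all_boot all_order all_algebra.
From mathcomp Require Import zify ring lra.
Set Implicit Arguments. Unset Strict Implicit.
Import GRing.Theory Num.Theory.
Local Open Scope ring_scope.

Lemma vq_spec (q n k : nat) : (1 < q)%N -> (0 < n)%N -> (q ^ k %| n)%N ->
  ~~ (q ^ k.+1 %| n)%N -> vq q n = k.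
Proof.
move=> q1 n0 dk ndk; rewrite /vq; case: eqP => [n_0|_]; first by rewrite n_0 in n0.
have kn : (k < n.+1)%N.
  apply: (@leq_trans (q ^ k).+1); first by rewrite ltnS ltnW // ltn_expl.
  by rewrite ltnS dvdn_leq.
apply/eqP; rewrite eqn_leq; apply/andP; split.
  apply/bigmax_leqP => j dj; rewrite leqNgt; apply/negP => kj.
  by move/negP: ndk; apply; apply: dvdn_trans dj; apply: dvdn_exp2l.
by apply: (leq_bigmax_cond (Ordinal kn)).
Qed.

Lemma vq_ex (q n : nat) : (1 < q)%N -> (0 < n)%N ->
  exists k, (q ^ k %| n)%N /\ ~~ (q ^ k.+1 %| n)%N.
Proof.
move=> q1 n0.
have ex : exists k, (q ^ k %| n)%N by exists 0%N; rewrite expn0 dvd1n.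
have bd : forall k, (q ^ k %| n)%N -> (k <= n)%N.
  move=> k dk; apply: ltnW; apply: (leq_trans (ltn_expl k q1)).
  exact: dvdn_leq.
case: (ex_maxnP ex bd) => m dm hm; exists m; split => //.
by apply/negP => /hm; rewrite ltnn.
Qed.

Lemma vq_mul (q i : nat) : (1 < q)%N -> (0 < i)%N -> vq q (i * q) = (vq q i).+1.
Proof.
move=> q1 i0; have [k [dk ndk]] := vq_ex q1 i0.
rewrite (vq_spec q1 i0 dk ndk); apply: vq_spec => //.
- by rewrite muln_gt0 i0 ltnW.
- by rewrite expnSr dvdn_mul.
- by rewrite expnSr dvdn_pmul2r // ltnW.
Qed.

Lemma vq_rem (q i r : nat) : (1 < q)%N -> (0 < r)%N -> (r < q)%N -> vq q (i * q + r) = 0%N.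
Proof.
move=> q1 r0 rq; apply: vq_spec => //.
- by rewrite addn_gt0 r0 orbT.
- rewrite expn1 dvdn_addr ?dvdn_mull //; apply/negP => /dvdn_leq.
  by move=> /(_ r0); rewrite leqNgt rq.
Qed.

Lemma vq0 q : vq q 0 = 0%N.
Proof. by []. Qed.

Lemma wqS q n : wq q n.+1 = (wq q n + vq q n.+1)%N.
Proof. by rewrite /wq big_nat_recr. Qed.

Lemma uqS q n : uq q n.+1 = (uq q n + wq q n.+1)%N.
Proof. by rewrite /uq big_nat_recr. Qed.

Lemma wq0 q : wq q 0 = 0%N.
Proof. by rewrite /wq big_nat1. Qed.

Lemma uq0 q : uq q 0 = 0%N.
Proof. by rewrite /uq big_nat1 wq0. Qed.

Lemma wq_main q a r : (1 < q)%N -> (r < q)%N -> wq q (a * q + r) = (a + wq q a)%N.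
Proof.
move=> q1; elim: a r => [|a IH] r.
  elim: r => [|r IHr] rq; first by rewrite wq0.
  by rewrite addnS wqS IHr ?(ltnW rq) // -addnS vq_rem // ?addn0.
elim: r => [|r IHr] rq.
  have e : ((a.+1 * q + 0) = (a * q + q.-1).+1)%N by rewrite mulSn; lia.
  rewrite e wqS IH; last by lia.
  rewrite -e addn0 vq_mul // wqS; lia.
rewrite addnS wqS IHr ?(ltnW rq) // -addnS vq_rem //; lia.
Qed.

Lemma uq_main q a r : (1 < q)%N -> (r < q)%N ->
  (2 * uq q (a * q + r) + 2 * q * wq q a + 2 * q * a
   = 2 * q * uq q a + 2 * r.+1 * (wq q a + a) + q * (a * a.+1))%N.
Proof.
move=> q1; elim: a r => [|a IH] r.
  elim: r => [|r IHr] rq; first by rewrite uq0 wq0; lia.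
  rewrite addnS uqS -addnS wq_main ?(ltnW rq) //.
  have := IHr (ltnW rq); rewrite wq0 uq0; lia.
elim: r => [|r IHr] rq.
  have e : ((a.+1 * q + 0) = (a * q + q.-1).+1)%N by rewrite mulSn; lia.
  have := IH q.-1 ltac:(lia).
  rewrite e uqS -e wq_main ?(ltnW q1) // uqS wqS ?addn0.
  have -> : (q.-1.+1 = q)%N by lia.
  move=> H; nia.
rewrite addnS uqS -addnS wq_main ?(ltnW rq) //.
have := IHr (ltnW rq); nia.
Qed.

Theorem lemma2p2 (q lambda a : nat) (hq : (2 <= q)%N) (hl : (lambda < q)%N) :
  let Q := q%:R : rat in
  let L := lambda%:R : rat in
  let A := a%:R : rat in
  ((uq q (a * q + lambda))%:R : rat)
    = Q * (uq q a)%:R + (L + 1 - Q) * (wq q a)%:R + Q / 2 * A ^+ 2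
      + (L + 1 - Q / 2) * A
  /\
  ((uq q (a * q + lambda))%:R : rat)
    = Q * (uq q a)%:R + (L + 1 - Q) * (wq q a)%:R + Q * (A * (A + 1) / 2)
      + (L + 1 - Q) * A.
Proof.
move=> Q L A.
have H := uq_main a hq hl.
have HR : (2 * (uq q (a * q + lambda))%:R + 2 * Q * (wq q a)%:R + 2 * Q * A
   = 2 * Q * (uq q a)%:R + 2 * (L + 1) * ((wq q a)%:R + A) + Q * (A * (A + 1)) :> rat).
  have := congr1 (fun n : nat => n%:R : rat) H.
  rewrite -[lambda.+1]addn1 -[a.+1]addn1 !natrD !natrM /Q /L /A => E; nra.
set U := (uq q (a * q + lambda))%:R : rat.
have -> : U = (2 * Q * (uq q a)%:R + 2 * (L + 1) * ((wq q a)%:R + A) + Q * (A * (A + 1))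
   - 2 * Q * (wq q a)%:R - 2 * Q * A) / 2.
  rewrite -HR; by field.
by split; field.
Qed.
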